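(* Let $\sigma$ be a countable relational signature containing a relation symbol $R$ of arity at least $2$. Let $\mathbf C$ be a class of groups such that no member of $\mathbf C$ has a subgroup isomorphic to $S(\omega)$, and suppose the trivial group belongs to $\mathbf C$. Let $\mathbf P=\{\mathcal A\in\mathbf S_\sigma:\mathrm{Aut}(\mathcal A)\cong\mathcal G\text{ for some }\mathcal G\in\mathbf C\}$. Then $\mathbf P$ is not expressible in $FO(\sigma)$; every abstract logic $L(\sigma)\geq FO(\sigma)$ that can express $\mathbf P$ fails the $\aleph_0$-compactness property; and every such logic which is moreover closed under negation has no proof system that is both sound and complete.
   Context: $\mathbf S_\sigma$ is the class of $\sigma$-structures; $\mathrm{Aut}(\mathcal A)$ is the automorphism group; $S(\omega)$ is the group of all permutations of $\omega=\{0,1,2,\dots\}$. An abstract logic over $\sigma$ is a pair $(L(\sigma),\models_{L(\sigma)})$ with $\models_{L(\sigma)}\subseteq\mathbf S_\sigma\times L(\sigma)$ isomorphism-invariant; a class $\mathbf P$ is expressed by it if some sentence is satisfied exactly by the members of $\mathbf P$; $L(\sigma)\geq FO(\sigma)$ means every first-order expressible class is $L(\sigma)$-expressible; $\aleph_0$-compactness: every countable finitely satisfiable set of sentences is satisfiable; closed under negation: each sentence has a sentence true in exactly the structures where it is false. A proof system $(\Pi,p,c)$ assigns to each $\pi\in\Pi$ a finite sequence $p(\pi)$ of premisses and a conclusion $c(\pi)$; sound: premisses semantically entail the conclusion; complete: whenever a set of sentences $\Gamma$ entails $\psi$ there is $\pi$ with conclusion $\psi$ and all premisses in $\Gamma$.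 *)

(* Defs.v *)
From mathcomp Require Import all_boot.
From Stdlib Require Import FunctionalExtensionality ProofIrrelevance.

Set Implicit Arguments.
Unset Strict Implicit.
Unset Printing Implicit Defensive.

Record signature := Signature { sym : Type; arity : sym -> nat }.

Record structure (sg : signature) := Struct {
  dom :> Type;
  dom_inh : inhabited dom;
  interp : forall s : sym sg, ('I_(arity s) -> dom) -> Prop }.

Arguments interp {sg} _ s t.

Definition is_iso (sg : signature) (A B : structure sg) (f : A -> B) : Prop :=
  bijective f /\
  forall (s : sym sg) (t : 'I_(arity s) -> A), interp A s t <-> interp B s (f \o t).

Definition isomorphic (sg : signature) (A B : structure sg) : Prop :=
  exists f : A -> B, is_iso f.

Record group := Group {
  gcar :> Type;
  gmul : gcar -> gcar -> gcar;
  gone : gcar;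
  ginv : gcar -> gcar;
  gmulA : associative gmul;
  gmul1 : left_id gone gmul;
  gmulV : left_inverse gone ginv gmul }.

Definition group_hom (G H : group) (f : G -> H) : Prop :=
  forall x y : G, f (gmul x y) = gmul (f x) (f y).

Definition group_isomorphic (G H : group) : Prop :=
  exists f : G -> H, group_hom f /\ bijective f.

Definition has_subgroup_iso_to (G H : group) : Prop :=
  exists f : H -> G, group_hom f /\ injective f.

Record perm_of (X : Type) := Perm {
  pfun : X -> X; pinv : X -> X;
  pK : cancel pfun pinv; pKV : cancel pinv pfun }.

Arguments pfun {X} p x.
Arguments pinv {X} p x.

Lemma perm_ext (X : Type) (p q : perm_of X) : pfun p =1 pfun q -> p = q.
Proof.
case: p q => f g fK gK [f' g' fK' gK'] /= Hf.
have Ef : f = f' by apply: functional_extensionality.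
subst f'.
have Eg : g = g'.
  apply: functional_extensionality => x.
  by rewrite -{1}(gK' x) fK.
subst g'.
by rewrite (proof_irrelevance _ fK fK') (proof_irrelevance _ gK gK').
Qed.

Definition perm_mul X (p q : perm_of X) : perm_of X.
Proof.
refine (@Perm X (pfun p \o pfun q) (pinv q \o pinv p) _ _).
- by move=> x /=; rewrite pK pK.
- by move=> x /=; rewrite pKV pKV.
Defined.

Definition perm_one X : perm_of X := @Perm X id id (fun _ => erefl) (fun _ => erefl).

Definition perm_inv X (p : perm_of X) : perm_of X :=
  @Perm X (pinv p) (pfun p) (@pKV X p) (@pK X p).

Lemma perm_mulA X : associative (@perm_mul X).
Proof. by move=> p q r; apply: perm_ext. Qed.

Lemma perm_mul1 X : left_id (perm_one X) (@perm_mul X).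
Proof. by move=> p; apply: perm_ext. Qed.

Lemma perm_mulV X : left_inverse (perm_one X) (@perm_inv X) (@perm_mul X).
Proof. by move=> p; apply: perm_ext => x /=; rewrite pK. Qed.

Definition Sym_group (X : Type) : group :=
  @Group (perm_of X) (@perm_mul X) (perm_one X) (@perm_inv X)
    (@perm_mulA X) (@perm_mul1 X) (@perm_mulV X).

Definition S_omega : group := Sym_group nat.

Record aut (sg : signature) (A : structure sg) := Aut {
  aperm : perm_of A;
  apres : forall (s : sym sg) (t : 'I_(arity s) -> A),
            interp A s t <-> interp A s (pfun aperm \o t) }.

Arguments aperm {sg A} a.
Arguments apres {sg A} a s t.

Lemma aut_ext sg (A : structure sg) (a b : aut A) : aperm a = aperm b -> a = b.
Proof.
case: a b => p Hp [q Hq] /= E; subst q.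
by rewrite (proof_irrelevance _ Hp Hq).
Qed.

Definition aut_mul sg (A : structure sg) (a b : aut A) : aut A.
Proof.
refine (@Aut sg A (perm_mul (aperm a) (aperm b)) _).
move=> s t; apply: iff_trans (apres b s t) _; exact: (apres a s (pfun (aperm b) \o t)).
Defined.

Definition aut_one sg (A : structure sg) : aut A :=
  @Aut sg A (perm_one A) (fun s t => iff_refl _).

Definition aut_inv sg (A : structure sg) (a : aut A) : aut A.
Proof.
refine (@Aut sg A (perm_inv (aperm a)) _).
move=> s t /=.
have E : pfun (aperm a) \o (pinv (aperm a) \o t) = t.
  by apply: functional_extensionality => i /=; rewrite pKV.
have := apres a s (pinv (aperm a) \o t); rewrite E => H.
by split => ?; apply/H.
Defined.

Lemma aut_mulA sg (A : structure sg) : associative (@aut_mul sg A).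
Proof. by move=> a b c; apply: aut_ext; apply: perm_mulA. Qed.

Lemma aut_mul1 sg (A : structure sg) : left_id (aut_one A) (@aut_mul sg A).
Proof. by move=> a; apply: aut_ext; apply: perm_mul1. Qed.

Lemma aut_mulV sg (A : structure sg) : left_inverse (aut_one A) (@aut_inv sg A) (@aut_mul sg A).
Proof. by move=> a; apply: aut_ext; apply: perm_mulV. Qed.

Definition Aut_group sg (A : structure sg) : group :=
  @Group (aut A) (@aut_mul sg A) (aut_one A) (@aut_inv sg A)
    (@aut_mulA sg A) (@aut_mul1 sg A) (@aut_mulV sg A).

Definition aut_in_class (sg : signature) (C : group -> Prop) (A : structure sg) : Prop :=
  exists G : group, C G /\ group_isomorphic (Aut_group A) G.

Arguments aut_in_class : clear implicits.

Inductive fo_formula (sg : signature) : Type :=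
| FEq : nat -> nat -> fo_formula sg
| FRel : forall s : sym sg, ('I_(arity s) -> nat) -> fo_formula sg
| FNot : fo_formula sg -> fo_formula sg
| FAnd : fo_formula sg -> fo_formula sg -> fo_formula sg
| FEx : nat -> fo_formula sg -> fo_formula sg.

Arguments FEq {sg}.
Arguments FRel {sg}.
Arguments FNot {sg}.
Arguments FAnd {sg}.
Arguments FEx {sg}.

Fixpoint fo_free (sg : signature) (v : nat) (phi : fo_formula sg) : Prop :=
  match phi with
  | FEq i j => v = i \/ v = j
  | FRel s a => exists k, a k = v
  | FNot psi => fo_free v psi
  | FAnd psi chi => fo_free v psi \/ fo_free v chi
  | FEx x psi => v <> x /\ fo_free v psi
  end.

Definition fo_sentence (sg : signature) (phi : fo_formula sg) : Prop :=
  forall v, ~ fo_free v phi.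

Fixpoint fo_eval (sg : signature) (A : structure sg) (e : nat -> A)
    (phi : fo_formula sg) : Prop :=
  match phi with
  | FEq i j => e i = e j
  | FRel s a => interp A s (e \o a)
  | FNot psi => ~ fo_eval e psi
  | FAnd psi chi => fo_eval e psi /\ fo_eval e chi
  | FEx x psi => exists a : A, fo_eval (fun y => if y == x then a else e y) psi
  end.

Arguments fo_eval {sg} A e phi.

Definition fo_sat (sg : signature) (A : structure sg) (phi : fo_formula sg) : Prop :=
  forall e : nat -> A, fo_eval A e phi.

Definition fo_expressible (sg : signature) (P : structure sg -> Prop) : Prop :=
  exists phi : fo_formula sg, fo_sentence phi /\ forall A, P A <-> fo_sat A phi.

Record abstract_logic (sg : signature) := AbsLogic {
  lsent : Type;
  lsat : structure sg -> lsent -> Prop;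
  lsat_iso : forall (A B : structure sg) (phi : lsent),
               isomorphic A B -> lsat A phi -> lsat B phi }.

Arguments lsat {sg} _ _ _.

Definition expresses (sg : signature) (L : abstract_logic sg) (P : structure sg -> Prop) : Prop :=
  exists phi : lsent L, forall A, lsat L A phi <-> P A.

Definition fo_le (sg : signature) (L : abstract_logic sg) : Prop :=
  forall phi : fo_formula sg, fo_sentence phi -> expresses L (fun A => fo_sat A phi).

Fixpoint in_list (T : Type) (x : T) (l : list T) : Prop :=
  match l with nil => False | cons y l' => x = y \/ in_list x l' end.

Definition countable_set (T : Type) (S : T -> Prop) : Prop :=
  exists f : T -> nat, forall x y, S x -> S y -> f x = f y -> x = y.

Definition satisfiable (sg : signature) (L : abstract_logic sg) (G : lsent L -> Prop) : Prop :=
  exists A : structure sg, forall phi, G phi -> lsat L A phi.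

Definition finitely_satisfiable (sg : signature) (L : abstract_logic sg)
    (G : lsent L -> Prop) : Prop :=
  forall l : list (lsent L), (forall phi, in_list phi l -> G phi) ->
    exists A : structure sg, forall phi, in_list phi l -> lsat L A phi.

Definition aleph0_compact (sg : signature) (L : abstract_logic sg) : Prop :=
  forall G : lsent L -> Prop, countable_set G -> finitely_satisfiable G -> satisfiable G.

Definition neg_closed (sg : signature) (L : abstract_logic sg) : Prop :=
  forall phi : lsent L, exists psi : lsent L, forall A, lsat L A psi <-> ~ lsat L A phi.

Definition entails (sg : signature) (L : abstract_logic sg) (G : lsent L -> Prop)
    (psi : lsent L) : Prop :=
  forall A : structure sg, (forall phi, G phi -> lsat L A phi) -> lsat L A psi.

Record proof_system (sg : signature) (L : abstract_logic sg) := ProofSystem {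
  proofs : Type;
  premisses : proofs -> list (lsent L);
  conclusion : proofs -> lsent L }.

Definition ps_sound (sg : signature) (L : abstract_logic sg) (PS : proof_system L) : Prop :=
  forall pi : proofs PS, entails (fun phi => in_list phi (premisses pi)) (conclusion pi).

Definition ps_complete (sg : signature) (L : abstract_logic sg) (PS : proof_system L) : Prop :=
  forall (G : lsent L -> Prop) (psi : lsent L), entails G psi ->
    exists pi : proofs PS, conclusion pi = psi /\ forall phi, in_list phi (premisses pi) -> G phi.

(* Main.v *)
Require Import Defs.
From mathcomp Require Import all_boot.
From Stdlib Require Import ClassicalEpsilon ProofIrrelevance FunctionalExtensionality PropExtensionality Classical Setoid Morphisms ZArith Lia.
From mathcomp Require classical_sets filter.
From mathcomp Require Import zify.
Set Implicit Arguments.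
Unset Strict Implicit.
Unset Printing Implicit Defensive.
Local Notation iter := ssrnat.iter.


Section Los.
Variable sg : signature.
Variable M : nat -> structure sg.
Variable U : (nat -> Prop) -> Prop.
Hypothesis UT : U (fun _ => True).
Hypothesis U0 : ~ U (fun _ => False).
Hypothesis UI : forall A B, U A -> U B -> U (fun n => A n /\ B n).
Hypothesis US : forall A B : nat -> Prop, (forall n, A n -> B n) -> U A -> U B.
Hypothesis UC : forall A, U A \/ U (fun n => ~ A n).

Definition Pr := forall n, M n.
Definition req (f g : Pr) := U (fun n => f n = g n).
Definition cls (f : Pr) : Pr -> Prop := fun g => req f g.
Definition Qt := {S : Pr -> Prop | exists f, S = cls f}.
Definition qc (f : Pr) : Qt := exist _ (cls f) (ex_intro _ f erefl).
Definition rep (q : Qt) : Pr := proj1_sig (constructive_indefinite_description _ (proj2_sig q)).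

Lemma rep_spec q : proj1_sig q = cls (rep q).
Proof. rewrite /rep; case: (constructive_indefinite_description _ _) => f /= ->; done. Qed.

Lemma req_refl f : req f f.
Proof. by apply: US UT => n. Qed.
Lemma req_sym f g : req f g -> req g f.
Proof. by apply: US => n ->. Qed.
Lemma req_trans f g h : req f g -> req g h -> req f h.
Proof. move=> H1 H2; apply: US (UI H1 H2) => n [-> ->]; done. Qed.

Lemma qc_eq f g : qc f = qc g <-> req f g.
Proof.
split.
- move=> E; have E' : cls f = cls g := f_equal (@proj1_sig _ _) E.
  have : cls f g by rewrite E'; exact: req_refl.
  done.
- move=> H; rewrite /qc.
  have E : cls f = cls g.
    apply: functional_extensionality => h; apply: propositional_extensionality.
    split => H'; [apply: req_trans (req_sym H) H'|apply: req_trans H H'].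
  move: (ex_intro _ f _) (ex_intro _ g _); rewrite E => p1 p2.
  by rewrite (proof_irrelevance _ p1 p2).
Qed.

Lemma qc_rep q : qc (rep q) = q.
Proof.
case: q => S HS; rewrite /qc.
have E : S = cls (rep (exist _ S HS)) by rewrite -rep_spec.
move: (ex_intro _ _ _); rewrite -E => p; by rewrite (proof_irrelevance _ p HS).
Qed.

Lemma rep_qc f : req (rep (qc f)) f.
Proof. apply/qc_eq; by rewrite qc_rep. Qed.

Definition pr_inh : Pr := fun n => epsilon (dom_inh (M n)) (fun _ => True).

Definition UP : structure sg :=
  @Struct sg Qt (inhabits (qc pr_inh))
    (fun s t => U (fun n => interp (M n) s (fun i => rep (t i) n))).

Lemma U_not A : ~ U A <-> U (fun n => ~ A n).
Proof.
split.
- move=> H; case: (UC A) => // HA; by case: (H HA).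
- move=> H1 H2; apply: U0; apply: US (UI H2 H1) => n [] a b; exact: b a.
Qed.

Lemma Los (phi : fo_formula sg) (e : nat -> UP) :
  fo_eval UP e phi <-> U (fun n => fo_eval (M n) (fun v => rep (e v) n) phi).
Proof.
elim: phi e => [i j|s a|psi IH|psi IH1 chi IH2|x psi IH] e /=.
- split.
  + move=> E; rewrite E; exact: req_refl.
  + move=> H; rewrite -(qc_rep (e i)) -(qc_rep (e j)); exact/qc_eq.
- done.
- rewrite IH; exact: U_not.
- rewrite IH1 IH2; split.
  + case=> H1 H2; exact: UI.
  + move=> H; split; apply: US H => n []//.
- split.
  + case=> q /IH H; apply: US H => n H; exists (rep q n).
    move: H; congr (fo_eval _ _ _); apply: functional_extensionality => v.
    by case: (v == x).
  + move=> H.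
    pose a : Pr := fun n => epsilon (dom_inh (M n))
       (fun b => fo_eval (M n) (fun y => if y == x then b else rep (e y) n) psi).
    exists (qc a); apply/IH.
    apply: US (UI H (rep_qc a)) => n [[b Hb] E].
    have Ha := epsilon_spec (dom_inh (M n))
       (fun b => fo_eval (M n) (fun y => if y == x then b else rep (e y) n) psi) (ex_intro _ b Hb).
    move: Ha; congr (fo_eval _ _ _); apply: functional_extensionality => v.
    by case: (v == x) => //; rewrite E.
Qed.

Lemma Los_sat (phi : fo_formula sg) :
  U (fun n => fo_sat (M n) phi) -> fo_sat UP phi.
Proof. move=> H e; apply/Los; apply: US H => n; exact. Qed.

End Los.


Section FO.
Variable sg : signature.
Variable R : sym sg.
Hypothesis HR : 2 <= arity R.

Definition FAll x (p : fo_formula sg) := FNot (FEx x (FNot p)).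
Definition FImp (a b : fo_formula sg) := FNot (FAnd a (FNot b)).
Definition FIff (a b : fo_formula sg) := FAnd (FImp a b) (FImp b a).
Definition tupT (T : Type) n (x y : T) : 'I_n -> T := fun i => if nat_of_ord i == 1 then y else x.
Definition Eat x y : fo_formula sg := FRel R (tupT x y).
Definition Ep x y : fo_formula sg := FAnd (FNot (FEq x y)) (Eat x y).
Definition Mk x := Eat x x.

Definition upd (A : Type) (e : nat -> A) x a := fun y => if y == x then a else e y.

Definition EA (A : structure sg) (a b : A) := interp A R (tupT a b).
Definition EpA (A : structure sg) (a b : A) := a <> b /\ EA a b.
Definition MkA (A : structure sg) (a : A) := EA a a.

Lemma eval_FAll (A : structure sg) e x p : fo_eval A e (FAll x p) <-> forall a, fo_eval A (upd e x a) p.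
Proof.
rewrite /FAll /=; split.
- move=> H a; apply: NNPP => Hn; apply: H; by exists a.
- by move=> H [a Ha]; apply: Ha; apply: H.
Qed.

Lemma eval_FImp (A : structure sg) e a b : fo_eval A e (FImp a b) <-> (fo_eval A e a -> fo_eval A e b).
Proof.
rewrite /FImp /=; split.
- move=> H Ha; apply: NNPP => Hb; exact: H.
- by move=> H [Ha Hb]; apply: Hb; apply: H.
Qed.

Lemma eval_FEx (A : structure sg) e x p : fo_eval A e (FEx x p) <-> exists a, fo_eval A (upd e x a) p.
Proof. done. Qed.
Lemma eval_FAnd (A : structure sg) e p q : fo_eval A e (FAnd p q) <-> fo_eval A e p /\ fo_eval A e q.
Proof. done. Qed.
Lemma eval_FNot (A : structure sg) e p : fo_eval A e (FNot p) <-> ~ fo_eval A e p.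
Proof. done. Qed.
Lemma eval_FEq (A : structure sg) e x y : fo_eval A e (FEq x y) <-> e x = e y.
Proof. done. Qed.

Lemma eval_Eat (A : structure sg) e x y : fo_eval A e (Eat x y) <-> EA (e x) (e y).
Proof.
rewrite /Eat /EA /=.
have -> : (e \o @tupT nat (arity R) x y) = tupT (e x) (e y).
  by apply: functional_extensionality => i; rewrite /tupT /=; case: (_ == _).
done.
Qed.

Lemma eval_Ep (A : structure sg) e x y : fo_eval A e (Ep x y) <-> EpA (e x) (e y).
Proof.
rewrite /Ep /EpA; split => -[H1 H2]; split => //; by [apply/eval_Eat | apply/(eval_Eat A e x y)].
Qed.

Lemma eval_Mk (A : structure sg) e x : fo_eval A e (Mk x) <-> MkA (e x).
Proof. exact: eval_Eat. Qed.

Lemma free_Eat v x y : fo_free v (Eat x y) -> v = x \/ v = y.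
Proof. by move=> /= [k]; rewrite /tupT; case: (_ == _) => <-; auto. Qed.

Lemma free_Ep v x y : fo_free v (Ep x y) -> v = x \/ v = y.
Proof. case=> H; [exact: H | exact: free_Eat]. Qed.

Definition Fn := FAll 0 (FEx 1 (FAnd (Ep 0 1) (FAll 2 (FImp (Ep 0 2) (FEq 2 1))))).
Definition Inj := FAll 0 (FAll 1 (FAll 2 (FImp (FAnd (Ep 0 2) (Ep 1 2)) (FEq 0 1)))).
Definition Surj := FAll 0 (FEx 1 (Ep 1 0)).
Definition Base := FAnd Fn (FAnd Inj Surj).

Definition BaseS (A : structure sg) :=
  (forall a : A, exists b, EpA a b /\ forall c, EpA a c -> c = b) /\
  (forall a a' b : A, EpA a b /\ EpA a' b -> a = a') /\
  (forall b : A, exists a, EpA a b).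

Lemma eval_Base (A : structure sg) e : fo_eval A e Base <-> BaseS A.
Proof.
rewrite /Base /BaseS /Fn /Inj /Surj.
repeat (setoid_rewrite eval_FAll || setoid_rewrite eval_FImp || setoid_rewrite eval_FEx
  || setoid_rewrite eval_FAnd || setoid_rewrite eval_FEq || setoid_rewrite eval_Ep).
all: by rewrite /upd /=.
Qed.

Ltac freeT := repeat match goal with
 | H : fo_free _ (FAll _ _) |- _ => destruct H as [? H]
 | H : fo_free _ (FImp _ _) |- _ => destruct H as [H|H]
 | H : fo_free _ (FAnd _ _) |- _ => destruct H as [H|H]
 | H : fo_free _ (FNot _) |- _ =>
     lazymatch type of H with fo_free ?v (FNot ?p) => change (fo_free v p) in H end
 | H : fo_free _ (Ep _ _) |- _ => apply free_Ep in H; destruct H as [H|H]; subst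
 | H : fo_free _ (Eat _ _) |- _ => apply free_Eat in H; destruct H as [H|H]; subst
 | H : fo_free _ (Mk _) |- _ => apply free_Eat in H; destruct H as [H|H]; subst
 | H : fo_free _ (FEq _ _) |- _ => destruct H as [H|H]; subst
 | H : fo_free _ (FEx _ _) |- _ => destruct H as [? H]
 | H : ?v <> ?v |- _ => exfalso; exact (H erefl)
 end.

Lemma closed_Base : fo_sentence Base.
Proof. move=> v H; rewrite /Base /Fn /Inj /Surj in H; freeT. Qed.

Fixpoint PathTo j a b : fo_formula sg := match j with
  | 0 => FEq a b
  | S j' => FEx j'.+2 (FAnd (Ep a j'.+2) (PathTo j' j'.+2 b)) end.

Fixpoint pathrel (A : structure sg) j (a b : A) : Prop := match j with
  | 0 => a = b
  | S j' => exists c, EpA a c /\ pathrel j' c b end.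

Lemma eval_PathTo (A : structure sg) j : forall a b (e : nat -> A), (a < 2 \/ j.+1 < a) -> b < 2 ->
  (fo_eval A e (PathTo j a b) <-> pathrel j (e a) (e b)).
Proof.
elim: j => [|j IH] a b e Ha Hb; first done.
rewrite /= -/(PathTo j j.+2 b).
have Ha' : (a == j.+2) = false.
  apply/eqP => E; case: Ha => H; rewrite E in H => //.
  by rewrite ltnS ltnn in H.
have Hb' : (b == j.+2) = false by apply/eqP => E; rewrite E in Hb.
split.
- case=> c [H1 H2]; exists c; split.
  + by move/eval_Ep: H1 => /=; rewrite Ha' eqxx.
  + move/IH: H2 => /=; rewrite Hb' eqxx; apply => //; right; done.
- case=> c [H1 H2]; exists c; split.
  + by apply/eval_Ep => /=; rewrite Ha' eqxx.
  + apply/IH => //=; first by right.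
    by rewrite Hb' eqxx.
Qed.

Lemma free_PathTo j : forall a b v, (a < 2 \/ j.+1 < a) -> b < 2 ->
  fo_free v (PathTo j a b) -> v = a \/ v = b.
Proof.
elim: j => [|j IH] a b v Ha Hb; first done.
move=> [Hv [H|H]].
- by case/free_Ep: H => E; [left | case: Hv].
- by have := IH _ _ _ (or_intror (ltnSn j.+1)) Hb H; case=> E; [case: Hv | right].
Qed.

Definition NoPath j := FNot (FEx 0 (FAnd (Mk 0) (FEx 1 (FAnd (Mk 1) (PathTo j 0 1))))).

Lemma eval_NoPath (A : structure sg) e j : fo_eval A e (NoPath j) <->
  ~ exists a b : A, MkA a /\ MkA b /\ pathrel j a b.
Proof.
rewrite /NoPath eval_FNot; split => H1 H2; apply: H1.
- case: H2 => a [b [Ha [Hb Hp]]]; exists a; split; first by apply/eval_Mk.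
  exists b; split; first by apply/eval_Mk.
  apply/eval_PathTo => //; by left.
- case: H2 => a [/eval_Mk Ha [b [/eval_Mk Hb /eval_PathTo Hp]]].
  exists a, b; split => //; split => //; apply: Hp => //; by left.
Qed.

Lemma closed_NoPath j : fo_sentence (NoPath j).
Proof.
move=> v [Hv0 [H|[Hv1 [H|H]]]].
- by case/free_Eat: H.
- by case/free_Eat: H.
- case: (free_PathTo (or_introl (isT : 0 < 2)) (isT : 1 < 2) H) => //.
Qed.

Fixpoint FU n (p : fo_formula sg) := match n with 0 => p | S n' => FU n' (FAll n' p) end.

Lemma eval_FU (A : structure sg) n : forall p (e : nat -> A), fo_eval A e (FU n p) <->
  forall e' : nat -> A, (forall v, n <= v -> e' v = e v) -> fo_eval A e' p.
Proof.
elim: n => [|n IH] p e /=.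
- split; first by move=> H e' He; have -> : e' = e by apply: functional_extensionality => v; apply: He.
  by apply; move=> v _.
- rewrite IH; split.
  + move=> H e'' He''.
    have := H (upd e'' n (e n)); rewrite eval_FAll => H'.
    have -> : e'' = upd (upd e'' n (e n)) n (e'' n).
      apply: functional_extensionality => v; rewrite /upd; case: eqP => // ->; done.
    apply: H' => v Hv; rewrite /upd; case: eqP => [->|Hne] //.
    apply: He''; rewrite ltn_neqAle Hv andbT; apply/eqP => E; apply: Hne; done.
  + move=> H e' He'; apply/eval_FAll => a; apply: H => v Hv.
    rewrite /upd; case: eqP => [E|Hne]; first by rewrite E ltnn in Hv.
    by apply: He'; apply: ltnW.
Qed.

Lemma free_FU n : forall p v, fo_free v (FU n p) -> n <= v /\ fo_free v p.
Proof.
elim: n => [|n IH] p v /=; first done.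
move=> /IH [H1 [H2 H3]]; split => //.
rewrite ltn_neqAle H1 andbT; apply/eqP => E; by apply: H2.
Qed.

Definition FTT : fo_formula sg := FEx 0 (FEq 0 0).

Fixpoint AllMk i := match i with 0 => FTT | S i' => FAnd (AllMk i') (Mk i') end.
Fixpoint AllNeq y i := match i with 0 => FTT | S i' => FAnd (AllNeq y i') (FNot (FEq y i')) end.

Lemma eval_FTT (A : structure sg) e : fo_eval A e FTT.
Proof. by exists (e 0). Qed.

Lemma eval_AllMk (A : structure sg) e i : fo_eval A e (AllMk i) <-> forall j, j < i -> MkA (e j).
Proof.
elim: i => [|i IH] /=; first by split => // _; exact: eval_FTT.
rewrite IH; split.
- case=> H1 /eval_Mk H2 j; rewrite ltnS leq_eqVlt; case/orP => [/eqP -> //|]; exact: H1.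
- move=> H; split; first by move=> j Hj; apply: H; apply: ltnW.
  apply/eval_Mk; exact: H.
Qed.

Lemma eval_AllNeq (A : structure sg) e y i : fo_eval A e (AllNeq y i) <-> forall j, j < i -> e y <> e j.
Proof.
elim: i => [|i IH] /=; first by split => // _; exact: eval_FTT.
rewrite IH; split.
- case=> H1 H2 j; rewrite ltnS leq_eqVlt; case/orP => [/eqP -> //|]; exact: H1.
- move=> H; split; first by move=> j Hj; apply: H; apply: ltnW.
  exact: H.
Qed.

Lemma free_AllMk i v : fo_free v (AllMk i) -> v < i.
Proof.
elim: i => [|i IH] /=; first by case=> H [H'|H'].
case=> [/IH H|/free_Eat [] ->]; by [apply: ltnW | ].
Qed.

Lemma free_AllNeq y i v : fo_free v (AllNeq y i) -> v = y \/ v < i.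
Proof.
elim: i => [|i IH] /=; first by case=> H [H'|H'].
case=> [/IH [H|H]|[H|H]]; [by left | by right; apply: ltnW | by left | by right; rewrite H].
Qed.

Definition NF k := FU k (FImp (AllMk k) (FEx k (FAnd (Mk k) (AllNeq k k)))).

Definition NFS (A : structure sg) k := forall p : nat -> A, (forall j, j < k -> MkA (p j)) ->
  exists a, MkA a /\ forall j, j < k -> a <> p j.

Lemma eval_NF (A : structure sg) e k : fo_eval A e (NF k) <-> NFS A k.
Proof.
rewrite /NF eval_FU; split.
- move=> H p Hp.
  pose e' := fun v => if v < k then p v else e v.
  have := H e'; rewrite eval_FImp eval_AllMk.
  case.
  + by move=> v Hv; rewrite /e' ltnNge Hv.
  + by move=> j Hj; rewrite /e' Hj; apply: Hp.
  move=> a [/eval_Mk Ha /eval_AllNeq Hn]; exists a; split.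
  + by move: Ha; rewrite eqxx.
  + move=> j Hj; have := Hn j Hj; rewrite eqxx.
    have -> : (j == k) = false by apply/eqP => E; rewrite E ltnn in Hj.
    by rewrite /e' Hj.
- move=> H e' _; rewrite eval_FImp eval_AllMk => Hm.
  case: (H e' Hm) => a [Ha Hn]; exists a; split.
  + by apply/eval_Mk => /=; rewrite eqxx.
  + apply/eval_AllNeq => j Hj /=; rewrite eqxx.
    have -> : (j == k) = false by apply/eqP => E; rewrite E ltnn in Hj.
    exact: Hn.
Qed.

Lemma closed_NF k : fo_sentence (NF k).
Proof.
move=> v /free_FU [Hk [H|[Hv [H|H]]]].
- by move/free_AllMk: H; rewrite ltnNge Hk.
- by case/free_Eat: H.
- case/free_AllNeq: H => // H; by rewrite ltnNge Hk in H.
Qed.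

Definition SymAx (s : sym sg) := FU (arity s) (FIff (FRel s (fun i => nat_of_ord i)) (FRel s (tupT 0 1))).
Definition EmptyAx (s : sym sg) := FU (arity s) (FNot (FRel s (fun i => nat_of_ord i))).

Definition SymS (A : structure sg) s := forall f : nat -> A,
  interp A s (fun i => f (nat_of_ord i)) <-> interp A s (fun i => f (tupT 0 1 i)).
Definition EmpS (A : structure sg) s := forall f : nat -> A, ~ interp A s (fun i => f (nat_of_ord i)).

Lemma tupT_comp (A : Type) (f : nat -> A) n x y : (fun i : 'I_n => f (tupT x y i)) = tupT (f x) (f y).
Proof. by apply: functional_extensionality => i; rewrite /tupT; case: (_ == _). Qed.

Lemma tupT_compo (A B : Type) (f : A -> B) n (x y : A) : (f \o @tupT A n x y) = tupT (f x) (f y).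
Proof. by apply: functional_extensionality => i; rewrite /tupT /=; case: (_ == _). Qed.

Lemma agree_tup (A : Type) n (f e' : nat -> A) (g : 'I_n -> nat) :
  (forall v, v < n -> e' v = f v) -> (forall i, g i < n) ->
  (fun i => e' (g i)) = (fun i => f (g i)).
Proof. by move=> H Hg; apply: functional_extensionality => i; apply: H. Qed.

Lemma agree_comp (A : Type) n (f e' : nat -> A) (g : 'I_n -> nat) :
  (forall v, v < n -> e' v = f v) -> (forall i, g i < n) ->
  (e' \o g) = (fun i => f (g i)).
Proof. by move=> H Hg; apply: functional_extensionality => i; apply: H. Qed.

Lemma tup01_lt n (i : 'I_n) : @tupT nat n 0 1 i < n.
Proof.
rewrite /tupT; case: eqP => [<-|_]; first exact: ltn_ord.
exact: leq_ltn_trans (leq0n _) (ltn_ord i).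
Qed.

Lemma FU_ex (A : structure sg) n (p : fo_formula sg) (e : nat -> A) :
  (forall e' : nat -> A, (forall v, n <= v -> e' v = e v) -> fo_eval A e' p) ->
  forall f : nat -> A, fo_eval A (fun v => if v < n then f v else e v) p.
Proof. move=> H f; apply: H => v Hv; by rewrite ltnNge Hv. Qed.

Lemma eval_SymAx (A : structure sg) e s : fo_eval A e (SymAx s) <-> SymS A s.
Proof.
rewrite /SymAx eval_FU /SymS; split.
- move=> H f.
  have := FU_ex H f; rewrite /FIff eval_FAnd !eval_FImp /=.
  rewrite !(@agree_comp _ _ f (fun v => if v < arity s then f v else e v)) //;
    [by move=> v -> | exact: tup01_lt | by move=> v ->].
- move=> H e' _; rewrite /FIff eval_FAnd !eval_FImp /=; exact: H.
Qed.

Lemma eval_EmptyAx (A : structure sg) e s : fo_eval A e (EmptyAx s) <-> EmpS A s.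
Proof.
rewrite /EmptyAx eval_FU /EmpS; split.
- move=> H f; have := FU_ex H f; rewrite eval_FNot /=.
  rewrite (@agree_comp _ _ f (fun v => if v < arity s then f v else e v)) //.
  by move=> v ->.
- move=> H e' _; rewrite eval_FNot /=; exact: H.
Qed.

Lemma closed_SymAx s : fo_sentence (SymAx s).
Proof.
move=> v /free_FU [Hv [[H|H]|[H|H]]].
- case: H => k Hk; by rewrite -Hk leqNgt ltn_ord in Hv.
- case: H => k Hk; move: Hv; rewrite -Hk leqNgt; by rewrite tup01_lt.
- case: H => k Hk; move: Hv; rewrite -Hk leqNgt; by rewrite tup01_lt.
- case: H => k Hk; by rewrite -Hk leqNgt ltn_ord in Hv.
Qed.

Lemma closed_EmptyAx s : fo_sentence (EmptyAx s).
Proof. move=> v /free_FU [Hv [k Hk]]; by rewrite -Hk leqNgt ltn_ord in Hv. Qed.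

Variable code : sym sg -> nat.
Hypothesis code_inj : injective code.

Definition sigA (s : sym sg) := if code s == code R then SymAx s else EmptyAx s.
Definition tau k := FAnd Base (FAnd (NoPath k.+1) (NF k)).

Lemma closed_sigA s : fo_sentence (sigA s).
Proof. rewrite /sigA; case: (_ == _); [exact: closed_SymAx | exact: closed_EmptyAx]. Qed.

Lemma closed_tau k : fo_sentence (tau k).
Proof.
move=> v H; change (fo_free v Base \/ fo_free v (NoPath k.+1) \/ fo_free v (NF k)) in H.
case: H => [H|[H|H]]; [exact (closed_Base H) | exact (closed_NoPath H) | exact (closed_NF H)].
Qed.

End FO.


Section Rigid.
Variable sg : signature.
Variable R : sym sg.
Hypothesis HR : 2 <= arity R.
Variable code : sym sg -> nat.
Hypothesis code_inj : injective code.
Variable N : nat.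

Definition KZ : Z := (Z.of_nat N + 2)%Z.
Definition markZ (x : Z) := exists p, (0 <= p)%Z /\ x = (KZ * p)%Z.
Definition ErelZ (x y : Z) := y = (x + 1)%Z \/ (x = y /\ markZ x).

Definition MN : structure sg :=
  @Struct sg Z (inhabits 0%Z) (fun s t => code s = code R /\
     exists i j : 'I_(arity s), nat_of_ord i = 0 /\ nat_of_ord j = 1 /\ ErelZ (t i) (t j)).

Definition i0R : 'I_(arity R) := Ordinal (ltn_trans (ltnSn 0) HR).
Definition i1R : 'I_(arity R) := Ordinal HR.

Lemma EA_MN (x y : MN) : EA R x y <-> ErelZ x y.
Proof.
rewrite /EA /=; split.
- case=> _ [i [j [Hi [Hj H]]]]; move: H; rewrite /tupT Hi Hj //.
- move=> H; split => //; exists i0R, i1R; split => //; split => //.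
Qed.

Lemma EpA_MN (x y : MN) : EpA R x y <-> y = (x + 1)%Z.
Proof.
rewrite /EpA EA_MN /ErelZ; split.
- by case=> H [//|[]].
- move=> ->; split; [lia | by left].
Qed.

Lemma MkA_MN (x : MN) : MkA R x <-> markZ x.
Proof. rewrite /MkA EA_MN /ErelZ; split; [case; [lia | by case] | by right]. Qed.

Lemma pathrel_MN j (a b : MN) : pathrel R j a b <-> b = (a + Z.of_nat j)%Z.
Proof.
elim: j a b => [|j IH] a b /=; first by split; lia.
split.
- case=> c [H1 H2]; move/EpA_MN: H1 => E1; have := (IH c b); case=> H3 _.
  rewrite (H3 H2) E1; lia.
- move=> ->; exists (a + 1)%Z; split; first exact/EpA_MN.
  apply (proj2 (IH (a + 1)%Z _)); lia.
Qed.

Lemma KZ_pos : (2 <= KZ)%Z.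
Proof. rewrite /KZ; lia. Qed.

Fixpoint bnd (p : nat -> Z) k : Z := match k with 0 => 0%Z | S k' => Z.max (bnd p k') (p k') end.

Lemma bnd_ge (p : nat -> Z) k j : j < k -> (p j <= bnd p k)%Z.
Proof.
elim: k => [//|k IH] /=; rewrite ltnS leq_eqVlt; case/orP => [/eqP ->|/IH]; lia.
Qed.

Lemma MN_tau k : k <= N -> forall e, fo_eval MN e (tau R k).
Proof.
move=> Hk e; split; [|split].
- apply/eval_Base; split; [|split].
  + move=> a; exists (a + 1)%Z; split; first exact/EpA_MN.
    by move=> c /EpA_MN.
  + by move=> a a' b [/EpA_MN H1 /EpA_MN H2]; lia.
  + move=> b; exists (b - 1)%Z; apply/EpA_MN; lia.
- apply/eval_NoPath => -[a [b [/MkA_MN [p [Hp Ea]] [/MkA_MN [q [Hq Eb]] /pathrel_MN E]]]].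
  have HK := KZ_pos.
  have Hj : (Z.of_nat k.+1 < KZ)%Z by move/leP: Hk => Hk; rewrite /KZ; lia.
  have : (KZ * (q - p) = Z.of_nat k.+1)%Z by lia.
  case: (Z_lt_le_dec 0 (q - p)) => H; nia.
- apply/eval_NF => p Hp.
  set B := bnd p k.
  exists (KZ * (Z.abs B + 1))%Z; split.
  + apply/MkA_MN; exists (Z.abs B + 1)%Z; split => //; lia.
  + move=> j Hj E; have := @bnd_ge p k j Hj; rewrite -/B -E; have := KZ_pos; nia.
Qed.

Lemma MN_sig s e : fo_eval MN e (sigA R code s).
Proof.
rewrite /sigA; case: eqP => Hs.
- apply/eval_SymAx => f /=.
  have E : forall i : 'I_(arity s), nat_of_ord i = 0 -> f (tupT 0 1 i) = f (nat_of_ord i).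
    by move=> i Hi; rewrite /tupT Hi.
  have E1 : forall i : 'I_(arity s), nat_of_ord i = 1 -> f (tupT 0 1 i) = f (nat_of_ord i).
    by move=> i Hi; rewrite /tupT Hi.
  split; case=> H1 [i [j [Hi [Hj H]]]]; split => //; exists i, j; do 2 split => //.
  + by rewrite E // E1.
  + by rewrite -E // -E1.
- apply/eval_EmptyAx => f /= [H _]; exact: Hs.
Qed.

Lemma MN_rigid (a : aut MN) : forall x, pfun (aperm a) x = x.
Proof.
set pi := pfun (aperm a).
have Hinj : injective pi := can_inj (pK (aperm a)).
have HE : forall x y : MN, ErelZ x y <-> ErelZ (pi x) (pi y).
  move=> x y; rewrite -!EA_MN /EA; have := apres a R (tupT x y).
  by rewrite tupT_compo.
have Hs : forall x, pi (x + 1)%Z = (pi x + 1)%Z.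
  move=> x; have : ErelZ x (x + 1)%Z by left.
  move/HE; case => // -[E _]; have := Hinj _ _ E; lia.
have Hm : forall x, markZ x <-> markZ (pi x).
  move=> x; split.
  - move=> H; have : ErelZ x x by right.
    move/(HE x x); case; [lia| by case].
  - move=> H; have : ErelZ (pi x) (pi x) by right.
    move/(HE x x); case; [lia| by case].
have Hlin : forall x, pi x = (pi 0%Z + x)%Z.
  apply: Z.peano_ind.
  - lia.
  - move=> x IH; rewrite -Z.add_1_r Hs IH; lia.
  - move=> x IH; have := Hs (Z.pred x).
    have -> : (Z.pred x + 1 = x)%Z by lia.
    rewrite IH; lia.
have HK := KZ_pos.
have H0 : (0 <= pi 0%Z)%Z.
  have : markZ 0%Z by exists 0%Z; split; lia.
  move/Hm => [p [Hp ->]]; nia.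
have H1 : (0 <= - pi 0%Z)%Z.
  have : markZ (pi (- pi 0%Z))%Z by rewrite Hlin; exists 0%Z; split; lia.
  move/(proj2 (Hm _)) => [p [Hp ->]]; nia.
move=> x; rewrite Hlin; lia.
Qed.

End Rigid.


Section Limit.
Variable sg : signature.
Variable R : sym sg.
Hypothesis HR : 2 <= arity R.
Variable code : sym sg -> nat.
Hypothesis code_inj : injective code.
Variable A : structure sg.
Hypothesis HB : BaseS R A.
Hypothesis HNP : forall j, ~ exists a b : A, MkA R a /\ MkA R b /\ pathrel R j.+1 a b.
Hypothesis HNF : forall k, NFS R A k.
Hypothesis Hsym : SymS A R.
Hypothesis Hemp : forall s, code s <> code R -> EmpS A s.

Let inh := dom_inh A.
Definition a0 : A := epsilon inh (fun _ => True).
Definition fA (a : A) : A := epsilon inh (fun b => EpA R a b).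
Definition gA (b : A) : A := epsilon inh (fun a => EpA R a b).

Lemma fA_spec a : EpA R a (fA a).
Proof. case: HB => [H _]; case: (H a) => b [Hb _]; exact: (epsilon_spec inh (fun b => EpA R a b) (ex_intro _ b Hb)). Qed.

Lemma fA_uniq a b : EpA R a b -> b = fA a.
Proof. case: HB => [H _]; case: (H a) => c [Hc U] Hb; rewrite (U _ Hb); symmetry; exact: U (fA_spec a). Qed.

Lemma gA_spec b : EpA R (gA b) b.
Proof. case: HB => [_ [_ H]]; case: (H b) => a Ha; exact: (epsilon_spec inh (fun a => EpA R a b) (ex_intro _ a Ha)). Qed.

Lemma fgK b : fA (gA b) = b.
Proof. symmetry; apply: fA_uniq; exact: gA_spec. Qed.

Lemma gfK a : gA (fA a) = a.
Proof. case: HB => [_ [H _]]; apply: (H _ _ (fA a)); split; [exact: gA_spec | exact: fA_spec]. Qed.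

Lemma EpA_f a b : EpA R a b <-> b = fA a.
Proof. split; [exact: fA_uniq | move=> ->; exact: fA_spec]. Qed.

Lemma pathrel_f j (a b : A) : pathrel R j a b <-> b = iter j fA a.
Proof.
elim: j a b => [|j IH] a b /=; first by split => ->.
split.
- case=> c [/EpA_f -> /IH ->]; by rewrite -iterSr.
- move=> ->; exists (fA a); split; first exact/EpA_f.
  apply/IH; by rewrite -iterSr.
Qed.

Lemma noloop j (a : A) : MkA R a -> MkA R (iter j.+1 fA a) -> False.
Proof. move=> H1 H2; apply: (HNP (j := j)); exists a, (iter j.+1 fA a); do 2 split => //; exact/pathrel_f. Qed.

Definition FZ (z : Z) (x : A) : A :=
  if (0 <=? z)%Z then iter (Z.to_nat z) fA x else iter (Z.to_nat (- z)) gA x.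

Lemma FZ_succ z x : FZ (z + 1) x = fA (FZ z x).
Proof.
rewrite /FZ; case: (Z.leb_spec 0 z) => Hz.
- have -> : (0 <=? z + 1)%Z = true by apply/Z.leb_le; lia.
  have -> : Z.to_nat (z + 1) = (Z.to_nat z).+1 by lia.
  done.
- case: (Z.leb_spec 0 (z + 1)) => Hz1.
  + have -> : (z = -1)%Z by lia.
    by rewrite /= fgK.
  + have -> : Z.to_nat (- z) = (Z.to_nat (- (z + 1))).+1 by lia.
    by rewrite /= fgK.
Qed.

Lemma FZ0 x : FZ 0 x = x.
Proof. done. Qed.

Lemma FZ_pred z x : FZ (z - 1) x = gA (FZ z x).
Proof. have := FZ_succ (z - 1) x; rewrite Z.sub_add => ->; by rewrite gfK. Qed.

Lemma FZ_add a b x : FZ (a + b) x = FZ a (FZ b x).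
Proof.
move: a; apply: Z.peano_ind.
- done.
- move=> a IH; rewrite -Z.add_1_r.
  have -> : (a + 1 + b = (a + b) + 1)%Z by lia.
  by rewrite !FZ_succ IH.
- move=> a IH; rewrite -Z.sub_1_r.
  have -> : (a - 1 + b = (a + b) - 1)%Z by lia.
  by rewrite !FZ_pred IH.
Qed.

Lemma FZ_nat n x : FZ (Z.of_nat n) x = iter n fA x.
Proof. rewrite /FZ; have -> : (0 <=? Z.of_nat n)%Z = true by apply/Z.leb_le; lia. by rewrite Nat2Z.id. Qed.

Lemma FZ_inv z x : FZ (- z) (FZ z x) = x.
Proof. by rewrite -FZ_add Z.add_opp_diag_l. Qed.

Lemma FZ_noloop z x : MkA R x -> MkA R (FZ z x) -> z = 0%Z.
Proof.
move=> H1 H2; case: (Z.lt_total z 0) => [Hz|[//|Hz]].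
- have [m E] : exists m, (- z = Z.of_nat m.+1)%Z by exists (Z.to_nat (- z) - 1)%coq_nat; lia.
  exfalso; apply: (@noloop m (FZ z x)) => //.
  by rewrite -FZ_nat -E FZ_inv.
- have [m E] : exists m, (z = Z.of_nat m.+1)%Z by exists (Z.to_nat z - 1)%coq_nat; lia.
  exfalso; apply: (@noloop m x) => //.
  by rewrite -FZ_nat -E.
Qed.

Definition newm k (p : nat -> A) : A := epsilon inh (fun a => MkA R a /\ forall j, j < k -> a <> p j).

Fixpoint pre k : nat -> A := match k with
  | 0 => fun _ => a0
  | S k' => fun i => if i == k' then newm k' (pre k') else pre k' i end.

Lemma pre_inv k : (forall j, j < k -> MkA R (pre k j)) /\
  (forall i j, i < k -> j < k -> pre k i = pre k j -> i = j).
Proof.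
elim: k => [|k [IH1 IH2]] //=.
have Hn : MkA R (newm k (pre k)) /\ forall j, j < k -> newm k (pre k) <> pre k j.
  case: (HNF IH1) => a Ha.
  exact: (epsilon_spec inh (fun a => MkA R a /\ forall j, j < k -> a <> pre k j) (ex_intro _ a Ha)).
split.
- move=> j Hj; case: eqP => [_|Hne]; first by case: Hn.
  apply: IH1; rewrite ltn_neqAle -ltnS Hj andbT; exact/eqP.
- move=> i j Hi Hj; case: eqP => Ei; case: eqP => Ej.
  + by rewrite Ei Ej.
  + move=> E; exfalso; case: Hn => _ Hn; apply: (Hn j) => //.
    rewrite ltn_neqAle -ltnS Hj andbT; exact/eqP.
  + move=> E; exfalso; case: Hn => _ Hn; apply: (Hn i) => //.
    rewrite ltn_neqAle -ltnS Hi andbT; exact/eqP.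
  + apply: IH2; rewrite ltn_neqAle -ltnS ?Hi ?Hj andbT; exact/eqP.
Qed.

Lemma pre_stable k i : i < k -> pre k i = pre i.+1 i.
Proof.
elim: k => [//|k IH] Hi /=.
case: eqP => [->|Hne]; first by rewrite /= eqxx.
rewrite IH //; rewrite ltn_neqAle -ltnS Hi andbT; exact/eqP.
Qed.

Definition iota i := pre i.+1 i.

Lemma iota_mk i : MkA R (iota i).
Proof. case: (pre_inv i.+1) => H _; exact: H. Qed.

Lemma iota_inj i j : iota i = iota j -> i = j.
Proof.
move=> E; case: (pre_inv (maxn i j).+1) => _ H; apply: H.
- by rewrite ltnS leq_maxl.
- by rewrite ltnS leq_maxr.
- rewrite !pre_stable //; by rewrite ltnS ?leq_maxl ?leq_maxr.
Qed.

Definition phi (p : nat * Z) : A := FZ p.2 (iota p.1).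

Lemma phi_inj p q : phi p = phi q -> p = q.
Proof.
case: p q => k z [k' z'] /= E.
have E1 : FZ (z - z') (iota k) = iota k'.
  have -> : (z - z' = - z' + z)%Z by lia.
  by rewrite FZ_add; move: E; rewrite /phi /= => ->; rewrite FZ_inv.
have Hz : (z - z')%Z = 0%Z by apply: (@FZ_noloop _ (iota k)); [exact: iota_mk | rewrite E1; exact: iota_mk].
have Hk : k = k' by apply: iota_inj; rewrite -E1 Hz.
rewrite Hk; f_equal; lia.
Qed.

Lemma phi_mk p : MkA R (phi p) <-> p.2 = 0%Z.
Proof.
split; last by case: p => k z /= ->; exact: iota_mk.
case: p => k z /= H; exact: (FZ_noloop (iota_mk k) H).
Qed.

Lemma phi_f p : fA (phi p) = phi (p.1, p.2 + 1)%Z.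
Proof. by rewrite /phi /= FZ_succ. Qed.

Lemma phi_g p : gA (phi p) = phi (p.1, p.2 - 1)%Z.
Proof. by rewrite /phi /= FZ_pred. Qed.

Definition inIm (x : A) := exists p, x = phi p.
Definition crd (x : A) : nat * Z := epsilon (inhabits (0, 0%Z)) (fun p => x = phi p).

Definition piA (s : nat -> nat) (x : A) : A :=
  if excluded_middle_informative (inIm x) then phi (s (crd x).1, (crd x).2) else x.

Lemma crd_phi p : crd (phi p) = p.
Proof.
have H := epsilon_spec (inhabits (0, 0%Z)) (fun q => phi p = phi q) (ex_intro _ p erefl).
symmetry; apply: phi_inj; exact: H.
Qed.

Lemma piA_phi s p : piA s (phi p) = phi (s p.1, p.2).
Proof.
rewrite /piA; destruct (excluded_middle_informative (inIm (phi p))) as [H0|H]; first by rewrite crd_phi.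
exfalso; apply: H; by exists p.
Qed.

Lemma piA_out s x : ~ inIm x -> piA s x = x.
Proof. by rewrite /piA; destruct (excluded_middle_informative (inIm x)). Qed.

Lemma piA_comp s t x : piA s (piA t x) = piA (s \o t) x.
Proof.
case: (classic (inIm x)) => [[p ->]|H]; first by rewrite !piA_phi.
by rewrite !piA_out.
Qed.

Lemma piA_id s x : (forall n, s n = n) -> piA s x = x.
Proof.
move=> Hs; case: (classic (inIm x)) => [[p ->]|H]; last by rewrite piA_out.
by rewrite piA_phi Hs; case: p.
Qed.

Lemma piA_f s x : piA s (fA x) = fA (piA s x).
Proof.
case: (classic (inIm x)) => [[p ->]|H].
- by rewrite phi_f !piA_phi phi_f.
- rewrite !piA_out //; move=> [p Ep]; apply: H; exists (p.1, p.2 - 1)%Z.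
  by rewrite -phi_g -Ep gfK.
Qed.

Lemma piA_mk s x : MkA R (piA s x) <-> MkA R x.
Proof.
case: (classic (inIm x)) => [[p ->]|H]; last by rewrite piA_out.
by rewrite piA_phi !phi_mk.
Qed.

Lemma EA_char (x y : A) : EA R x y <-> (x <> y /\ y = fA x) \/ (x = y /\ MkA R x).
Proof.
case: (classic (x = y)) => [<-|Hne].
- rewrite /MkA; split; [by right | case; [by case | by case]].
- rewrite -EpA_f /EpA; split => [H|[[_ [_ H]]|[E _]]] //; first by left.
Qed.

Lemma piA_inj s t : (forall n, t (s n) = n) -> injective (piA s).
Proof.
move=> Hts x y E; rewrite -(@piA_id (t \o s) x) // -(@piA_id (t \o s) y) //.
by rewrite -(piA_comp t s x) -(piA_comp t s y) E.
Qed.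

Lemma piA_EA s t : (forall n, t (s n) = n) -> forall x y, EA R x y <-> EA R (piA s x) (piA s y).
Proof.
move=> Hts x y; have Hi := piA_inj Hts.
rewrite !EA_char piA_mk -piA_f; split.
- case=> [[H1 E]|[E H]]; last by right; split => //; rewrite E.
  left; rewrite -E; split => // /Hi; exact: H1.
- case=> [[H1 /Hi E]|[/Hi E H]]; last by right.
  left; split => // Exy; apply: H1; by rewrite Exy.
Qed.

Definition tfun n (t : 'I_n -> A) : nat -> A := fun v => match insub v with Some i => t i | None => a0 end.

Lemma tfun_ord n (t : 'I_n -> A) (i : 'I_n) : tfun t (nat_of_ord i) = t i.
Proof. by rewrite /tfun (valK i). Qed.

Lemma intR (t : 'I_(arity R) -> A) : interp A R t <-> EA R (t (i0R HR)) (t (i1R HR)).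
Proof.
have E1 : (fun i : 'I_(arity R) => tfun t (nat_of_ord i)) = t.
  by apply: functional_extensionality => i; rewrite tfun_ord.
have := Hsym (tfun t); rewrite E1 tupT_comp => ->.
rewrite /EA; have -> : tfun t 0 = t (i0R HR) by rewrite -(tfun_ord t (i0R HR)).
by have -> : tfun t 1 = t (i1R HR) by rewrite -(tfun_ord t (i1R HR)).
Qed.

Lemma int_other s (t : 'I_(arity s) -> A) : code s <> code R -> ~ interp A s t.
Proof.
move=> Hs; have H0 := Hemp Hs; rewrite /EmpS in H0; have := H0 (tfun t).
have -> : (fun i : 'I_(arity s) => tfun t (nat_of_ord i)) = t.
  by apply: functional_extensionality => i; rewrite tfun_ord.
done.
Qed.

Lemma piA_pres s t : (forall n, t (s n) = n) ->
  forall (s0 : sym sg) (tt : 'I_(arity s0) -> A), interp A s0 tt <-> interp A s0 (piA s \o tt).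
Proof.
move=> Hts s0 tt; case: (classic (code s0 = code R)) => Hs.
- have E := code_inj Hs; subst s0.
  rewrite !intR /=; exact: piA_EA.
- split => H; exfalso; exact: int_other H.
Qed.

Lemma autS_K (sig : perm_of nat) : cancel (piA (pfun sig)) (piA (pinv sig)).
Proof. move=> x; rewrite piA_comp piA_id // => n /=; exact: pK. Qed.

Lemma autS_KV (sig : perm_of nat) : cancel (piA (pinv sig)) (piA (pfun sig)).
Proof. move=> x; rewrite piA_comp piA_id // => n /=; exact: pKV. Qed.

Lemma autS_pres (sig : perm_of nat) : forall (s0 : sym sg) (tt : 'I_(arity s0) -> A),
  interp A s0 tt <-> interp A s0 (piA (pfun sig) \o tt).
Proof. move=> s0 tt; apply: (@piA_pres (pfun sig) (pinv sig)) => n; exact: pK. Qed.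

Definition autS (sig : perm_of nat) : aut A :=
  @Aut sg A (@Perm A _ _ (autS_K sig) (autS_KV sig)) (autS_pres sig).

Lemma S_omega_in_Aut : has_subgroup_iso_to (Aut_group A) S_omega.
Proof.
exists autS; split.
- move=> x y; apply: aut_ext; apply: perm_ext => z /=; by rewrite piA_comp.
- move=> x y E; apply: perm_ext => n.
  have := f_equal (fun a => pfun (aperm a) (phi (n, 0%Z))) E => /=.
  rewrite !piA_phi /= => /phi_inj; by case.
Qed.

End Limit.


Lemma ex_ultra : exists U : (nat -> Prop) -> Prop,
  U (fun _ => True) /\ ~ U (fun _ => False) /\
  (forall A B, U A -> U B -> U (fun n => A n /\ B n)) /\
  (forall A B : nat -> Prop, (forall n, A n -> B n) -> U A -> U B) /\
  (forall A, U A \/ U (fun n => ~ A n)) /\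
  (forall N, U (fun n => N <= n)).
Proof.
have [G [GU sFG]] := filter.ultraFilterLemma filter.eventually_filter.
exists G; split; [|split; [|split; [|split; [|split]]]].
- exact: (@filter.filterT _ G).
- exact: (@filter.filter_not_empty _ G).
- move=> A B GA GB; exact: (@filter.filterI _ G _ A B).
- move=> A B AB GA; exact: (@filter.filterS _ G _ A B AB).
- move=> A; exact: filter.in_ultra_setVsetC.
- move=> N; apply: sFG; exists N => //.
Qed.

Lemma eval_tau sg (R : sym sg) (A : structure sg) e k : fo_eval A e (tau R k) <->
  fo_eval A e (Base R) /\ fo_eval A e (NoPath R k.+1) /\ fo_eval A e (NF R k).
Proof. done. Qed.

Section Main.
Variable sg : signature.
Variable R : sym sg.
Hypothesis HR : 2 <= arity R.
Variable code : sym sg -> nat.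
Hypothesis code_inj : injective code.
Variable C : group -> Prop.
Hypothesis HnoS : forall G : group, C G -> ~ has_subgroup_iso_to G S_omega.
Hypothesis Htriv : exists G : group, C G /\ forall x y : G, x = y.

Lemma MN_in_P N : aut_in_class sg C (MN R code N).
Proof.
case: Htriv => G [CG Gt]; exists G; split => //.
exists (fun _ => gone G); split; first by move=> x y; apply: Gt.
exists (fun _ => aut_one _).
- move=> a; apply: aut_ext; apply: perm_ext => x /=; symmetry; exact: MN_rigid.
- move=> g; exact: Gt.
Qed.

Lemma not_P (A : structure sg) : (forall k, fo_sat A (tau R k)) ->
  (forall s, fo_sat A (sigA R code s)) -> ~ aut_in_class sg C A.
Proof.
move=> Ht Hs [G [CG [h [hh [h' hK h'K]]]]].
case: (dom_inh A) => a0; pose e := fun _ : nat => a0.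
have HB : BaseS R A by have := Ht 0 e; rewrite eval_tau => -[/eval_Base H _].
have HNP : forall j, ~ exists a b : A, MkA R a /\ MkA R b /\ pathrel R j.+1 a b.
  by move=> j; have := Ht j e; rewrite eval_tau => -[_ [/eval_NoPath H _]].
have HNF : forall k, NFS R A k.
  by move=> k; have := Ht k e; rewrite eval_tau => -[_ [_ /eval_NF H]].
have Hsym : SymS A R.
  by have := Hs R e; rewrite /sigA eqxx => /eval_SymAx.
have Hemp : forall s, code s <> code R -> EmpS A s.
  move=> s Hne; have := Hs s e; rewrite /sigA.
  by case: eqP => // _ /eval_EmptyAx.
have [k [hk kinj]] := S_omega_in_Aut HR code_inj HB HNP HNF Hsym Hemp.
apply: (HnoS CG); exists (h \o k); split.
- by move=> x y /=; rewrite hk hh.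
- move=> x y /= E; apply: kinj; exact: (can_inj hK).
Qed.

Lemma not_fo : ~ fo_expressible (aut_in_class sg C).
Proof.
case=> phi [Hs Hphi].
case: ex_ultra => U [UT [U0 [UI [US [UC UN]]]]].
pose M := fun n => MN R code n.
have Hup : fo_sat (UP M U) phi.
  apply: Los_sat => //; apply: US UT => n _; apply/Hphi; exact: MN_in_P.
apply: (@not_P (UP M U)).
- move=> k; apply: Los_sat => //; apply: US (UN k) => n Hn; exact: MN_tau.
- move=> s; apply: Los_sat => //; apply: US UT => n _ e; exact: MN_sig.
- exact/Hphi.
Qed.

Lemma bad_set (L : abstract_logic sg) (HL : fo_le L) (th : lsent L)
  (Hth : forall A, lsat L A th <-> aut_in_class sg C A) :
  exists G : lsent L -> Prop, countable_set G /\ finitely_satisfiable G /\ ~ satisfiable G /\ G th.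
Proof.
pose tr (phi : fo_formula sg) := epsilon (inhabits th) (fun psi => forall A, lsat L A psi <-> fo_sat A phi).
have tr_spec : forall phi, fo_sentence phi -> forall A, lsat L A (tr phi) <-> fo_sat A phi.
  move=> phi Hp; case: (HL phi Hp) => psi Hpsi.
  exact: (epsilon_spec (inhabits th) (fun psi => forall A, lsat L A psi <-> fo_sat A phi) (ex_intro _ psi Hpsi)).
pose G := fun psi => psi = th \/ (exists k, psi = tr (tau R k)) \/ (exists s, psi = tr (sigA R code s)).
pose P := fun n psi => (n = 0 /\ psi = th) \/ (exists k, n = (k + k).+1 /\ psi = tr (tau R k)) \/
   (exists s, n = (code s + code s).+2 /\ psi = tr (sigA R code s)).
pose cnt := fun psi => epsilon (inhabits 0) (fun n => P n psi).
have HP : forall psi, G psi -> P (cnt psi) psi.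
  move=> psi Hg; have : exists n, P n psi.
    case: Hg => [->|[[k ->]|[s ->]]]; [exists 0; left | exists (k + k).+1; right; left; exists k
      | exists (code s + code s).+2; right; right; exists s]; by [].
  move=> Hex; exact: (epsilon_spec (inhabits 0) (fun n => P n psi) Hex).
have HPu : forall n x y, P n x -> P n y -> x = y.
  move=> n x y [[-> ->]|[[k [-> ->]]|[s [-> ->]]]] [[Hn ->]|[[k' [Hn ->]]|[s' [Hn ->]]]] //; try lia.
  - by have -> : k = k' by lia.
  - by have -> : s = s' by apply: code_inj; lia.
exists G; split; [|split; [|split]].
- exists cnt => x y Gx Gy E; apply: (HPu (cnt x)); [exact: HP | rewrite E; exact: HP].
- move=> l Hl.
  have [N HN] : exists N, forall psi, in_list psi l -> psi = th \/ (exists k, k <= N /\ psi = tr (tau R k))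
      \/ (exists s, psi = tr (sigA R code s)).
    elim: l Hl => [|x l IH] Hl; first by exists 0.
    case: IH => [psi Hpsi|N HN]; first by apply: Hl; right.
    case: (Hl x (or_introl erefl)) => [->|[[k ->]|[s ->]]].
    + exists N => psi [->|/HN]; [by left | done].
    + exists (maxn N k) => psi [->|/HN].
      * right; left; exists k; split => //; exact: leq_maxr.
      * case=> [->|[[k' [Hk' ->]]|H]]; [by left| |by right; right].
        right; left; exists k'; split => //; exact: leq_trans Hk' (leq_maxl _ _).
    + exists N => psi [->|/HN]; [by right; right; exists s| done].
  exists (MN R code N) => psi /HN [->|[[k [Hk ->]]|[s ->]]].
  + apply/Hth; exact: MN_in_P.
  + apply/tr_spec; [exact: closed_tau | exact: MN_tau].
  + apply/tr_spec; [exact: closed_sigA | move=> e; exact: MN_sig].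
- case=> A HA; apply: (@not_P A).
  + move=> k; apply/tr_spec; [exact: closed_tau | apply: HA; right; left; by exists k].
  + move=> s; apply/tr_spec; [exact: closed_sigA | apply: HA; right; right; by exists s].
  + apply/Hth; apply: HA; by left.
- by left.
Qed.

End Main.

Theorem mainTheorem4 (sg : signature)
  (Hcount : exists f : sym sg -> nat, injective f)
  (R : sym sg) (HR : 2 <= arity R)
  (C : group -> Prop)
  (HnoS : forall G : group, C G -> ~ has_subgroup_iso_to G S_omega)
  (Htriv : exists G : group, C G /\ forall x y : G, x = y) :
  ~ fo_expressible (aut_in_class sg C) /\
  (forall L : abstract_logic sg,
     fo_le L -> expresses L (aut_in_class sg C) -> ~ aleph0_compact L) /\
  (forall L : abstract_logic sg,
     fo_le L -> expresses L (aut_in_class sg C) -> neg_closed L ->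
     ~ exists PS : proof_system L, ps_sound PS /\ ps_complete PS).
Proof.
case: Hcount => code code_inj.
split; [|split].
- exact: (not_fo HR code_inj HnoS Htriv).
- move=> L HL [th Hth] Hc.
  have [G [Gc [Gf [Gns Gth]]]] := bad_set HR code_inj HnoS Htriv HL Hth.
  exact: Gns (Hc G Gc Gf).
- move=> L HL [th Hth] Hneg [PS [Hs Hcm]].
  have [G [Gc [Gf [Gns Gth]]]] := bad_set HR code_inj HnoS Htriv HL Hth.
  case: (Hneg th) => psi Hpsi.
  have Hent : entails G psi by move=> A HA; exfalso; apply: Gns; exists A.
  case: (Hcm G psi Hent) => pi [Hc Hprem].
  case: (Gf (cons th (premisses pi))) => [phi [->|/Hprem] //|A HA].
  have := Hs pi A (fun phi H => HA phi (or_intror H)); rewrite Hc => /Hpsi; apply.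
  apply: HA; by left.
Qed.
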